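(* For $k\in\mathbb N$ let $\mathcal H_k(e^q,J^-)=\frac1k\operatorname{tr}((J^-)^k)$ on $\mathfrak M_{0,-}^{\mathrm{reg}}$ (the restriction of $h_k=\frac1k\Re\operatorname{tr}(J^k)$). Then for every $\mathcal F\in C^\infty(\mathfrak M_{0,-}^{\mathrm{reg}})^{\mathbb T^n}$ and $k\in\mathbb N$, $$\{\mathcal F,\mathcal H_k\}_{2,-}^{\mathrm{red}}=\{\mathcal F,\mathcal H_{k+1}\}_{1,-}^{\mathrm{red}}=\langle\nabla_1\mathcal F,\mathcal V_k[q]\rangle+\langle d_2\mathcal F,\mathcal V_k[J^-]\rangle,$$ where $\mathcal V_k[q]\in\mathcal G_0^-$ has diagonal entries $((J^-)^k)_{jj}$ and $\mathcal V_k[J^-]=[R(q)(J^-)^k,J^-]$. Moreover, if one parametrizes $J^-$ as $(J^-)_{ij}=p_i\delta_{ij}-(1-\delta_{ij})\frac{\xi_{ij}}{\sinh(q_i-q_j)}$ with $p_i\in\mathbb R$ and $\xi$ an anti-Hermitian matrix with zero diagonal, then $$\mathcal H_2=\frac12\sum_{i=1}^np_i^2+\sum_{1\le i<j\le n}\frac{|\xi_{ij}|^2}{\sinh^2(q_i-q_j)},$$ and the functions $\tilde h_k=\frac1k\Im\operatorname{tr}(J^k)$ vanish identically on $\mathfrak M_{0,-}^{\mathrm{reg}}$.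
   Context: $\mathcal G=\mathfrak{gl}(n,\mathbb C)$ (real Lie algebra) with $\langle X,Y\rangle=\Re\operatorname{tr}(XY)$; $\mathcal G^+=\mathfrak u(n)$ (anti-Hermitian), $\mathcal G^-=\mathrm i\,\mathfrak u(n)$ (Hermitian), $X^\pm=\frac12(X\mp X^* )$, $\mathcal G^\pm_0$ the diagonal matrices in $\mathcal G^\pm$. $\mathfrak M_{0,-}^{\mathrm{reg}}=\{(e^q,J^-): J^-\in\mathcal G^-,\ q=\mathrm{diag}(q_1,\dots,q_n),\ q_i\in\mathbb R,\ q_1>\dots>q_n\}$, with the diagonal unitary torus $\mathbb T^n$ acting by $J^-\mapsto\tau J^-\tau^{-1}$. For $\mathcal F\in C^\infty(\mathfrak M_{0,-}^{\mathrm{reg}})$: $\nabla_1\mathcal F\in\mathcal G_0^-$ with $\langle\nabla_1\mathcal F,X_0\rangle=\frac{d}{dt}|_0\mathcal F(e^{q+tX_0},J^-)$ ($X_0\in\mathcal G_0^-$), $d_2\mathcal F\in\mathcal G^-$ with $\langle d_2\mathcal F,X\rangle=\frac{d}{dt}|_0\mathcal F(e^q,J^-+tX)$ ($X\in\mathcal G^-$), $\nabla_2\mathcal F=J^-d_2\mathcal F$. $R(q)\in\mathrm{End}(\mathcal G)$: $(R(q)X)_{ii}=0$, $(R(q)X)_{ij}=X_{ij}\coth(q_i-q_j)$ for $i\ne j$. The Poisson brackets on $C^\infty(\mathfrak M_{0,-}^{\mathrm{reg}})^{\mathbb T^n}$ are $\{\mathcal F,\mathcal H\}_{1,-}^{\mathrm{red}}=\langle\nabla_1\mathcal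 F,d_2\mathcal H\rangle-\langle\nabla_1\mathcal H,d_2\mathcal F\rangle+\langle J^-,[R(q)d_2\mathcal F,d_2\mathcal H]+[d_2\mathcal F,R(q)d_2\mathcal H]\rangle$ and $\{\mathcal F,\mathcal H\}_{2,-}^{\mathrm{red}}=\langle\nabla_1\mathcal F,\nabla_2\mathcal H\rangle-\langle\nabla_1\mathcal H,\nabla_2\mathcal F\rangle+2\langle\nabla_2\mathcal F,R(q)\nabla_2\mathcal H\rangle$ (derivatives at $(e^q,J^-)$). *)

(* Defs.v *)
From HB Require Import structures.
From mathcomp Require Import all_boot all_order all_algebra.
From mathcomp Require Import complex.
From mathcomp Require Import all_classical all_reals all_analysis.

Set Implicit Arguments.
Unset Strict Implicit.
Unset Printing Implicit Defensive.

Import Order.TTheory GRing.Theory Num.Theory.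
Import numFieldNormedType.Exports.
Local Open Scope ring_scope.
Local Open Scope complex_scope.

Section Defs.
Variable R : realType.
Variable n : nat.

Local Notation C := (R[i]).
Local Notation Mx := ('M[R[i]]_n).

Definition sinh (x : R) : R := (expR x - expR (- x)) / 2.
Definition cosh (x : R) : R := (expR x + expR (- x)) / 2.
Definition coth (x : R) : R := cosh x / sinh x.

Definition adjmx (A : Mx) : Mx := \matrix_(i, j) conjc (A j i).
Definition hermitian_mx (A : Mx) : Prop := adjmx A = A.
Definition antihermitian_mx (A : Mx) : Prop := adjmx A = - A.

Definition pairing (X Y : Mx) : R := complex.Re (\tr (X *m Y)).

Definition mxcomm (X Y : Mx) : Mx := X *m Y - Y *m X.

(* k-th matrix power (works for every size n) *)
Definition mxpow (A : Mx) (k : nat) : Mx := iter k (fun B => A *m B) 1%:M.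

(* real diagonal matrix (element of G_0^-) attached to q in R^n *)
Definition diagR (v : 'rV[R]_n) : Mx :=
  \matrix_(i, j) if i == j then (v ord0 i)%:C else 0.

Definition Rq (q : 'rV[R]_n) (X : Mx) : Mx :=
  \matrix_(i, j) if i == j then 0 else X i j * (coth (q ord0 i - q ord0 j))%:C.

(* regular_q part: q_1 > ... > q_n, J^- Hermitian *)
Definition regular_q (q : 'rV[R]_n) : Prop :=
  forall i j : 'I_n, (i < j)%N -> q ord0 j < q ord0 i.

(* functions on M_{0,-}^reg, written in the coordinates (q, J^-) *)
Definition fn := 'rV[R]_n -> Mx -> R.

Definition torus_invariant (F : fn) : Prop :=
  forall (u : 'I_n -> C), (forall j, `|u j| = 1) ->
  forall q J, F q ((\matrix_(i, j) if i == j then u i else 0) *m J *m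
                   (\matrix_(i, j) if i == j then conjc (u i) else 0)) = F q J.

(* g is (the vector of diagonal entries of) nabla_1 F at (e^q, J) *)
Definition is_nabla1 (F : fn) (q : 'rV[R]_n) (J : Mx) (g : 'rV[R]_n) : Prop :=
  forall X0 : 'rV[R]_n,
    derivable (fun t : R => F (q + t *: X0) J) 0 1 /\
    'D_1 (fun t : R => F (q + t *: X0) J) 0 = pairing (diagR g) (diagR X0).

Definition is_d2 (F : fn) (q : 'rV[R]_n) (J : Mx) (D : Mx) : Prop :=
  hermitian_mx D /\
  forall X : Mx, hermitian_mx X ->
    derivable (fun t : R => F q (J + t%:C *: X)) 0 1 /\
    'D_1 (fun t : R => F q (J + t%:C *: X)) 0 = pairing D X.

(* reduced Poisson brackets at (e^q, J), from the derivatives of F and H: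
   gF = nabla_1 F, DF = d_2 F, gH = nabla_1 H, DH = d_2 H *)
Definition bracket1 (q : 'rV[R]_n) (J : Mx) (gF : 'rV[R]_n) (DF : Mx)
    (gH : 'rV[R]_n) (DH : Mx) : R :=
  pairing (diagR gF) DH - pairing (diagR gH) DF
  + pairing J (mxcomm (Rq q DF) DH + mxcomm DF (Rq q DH)).

Definition bracket2 (q : 'rV[R]_n) (J : Mx) (gF : 'rV[R]_n) (DF : Mx)
    (gH : 'rV[R]_n) (DH : Mx) : R :=
  pairing (diagR gF) (J *m DH) - pairing (diagR gH) (J *m DF)
  + 2 * pairing (J *m DF) (Rq q (J *m DH)).

(* H_k = (1/k) tr((J^-)^k) (complex-valued expression), and its real
   version Re, i.e. the restriction of h_k = (1/k) Re tr(J^k) *)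
Definition Htr (k : nat) (J : Mx) : C := (k%:R)^-1 * \tr (mxpow J k).
Definition Hk (k : nat) : fn := fun _ J => complex.Re (Htr k J).
Definition htilde (k : nat) : fn := fun _ J => complex.Im (Htr k J).

Definition Vq (k : nat) (J : Mx) : Mx :=
  \matrix_(i, j) if i == j then mxpow J k i i else 0.
Definition VJ (k : nat) (q : 'rV[R]_n) (J : Mx) : Mx :=
  mxcomm (Rq q (mxpow J k)) J.

Definition Jpar (q p : 'rV[R]_n) (xi : Mx) : Mx :=
  \matrix_(i, j) if i == j then (p ord0 i)%:C
                 else - (xi i j / (sinh (q ord0 i - q ord0 j))%:C).

End Defs.

(* Main.v *)
Require Import Defs.
From HB Require Import structures.
From mathcomp Require Import all_boot all_order all_algebra.
From mathcomp Require Import complex.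
From mathcomp Require Import all_classical all_reals all_analysis.
From mathcomp Require Import lra zify.
Import Order.TTheory GRing.Theory Num.Theory.
Import numFieldNormedType.Exports.
Local Open Scope ring_scope.
Local Open Scope complex_scope.



Section H.
Context {R : realType}.
Context {n : nat}.
Local Notation C := (R[i]).
Local Notation Mx := ('M[R[i]]_n).

Lemma ReD (x y : C) : complex.Re (x + y) = complex.Re x + complex.Re y. Proof. by case: x => a b; case: y => c d. Qed.
Lemma ReN (x : C) : complex.Re (- x) = - complex.Re x. Proof. by case: x. Qed.
Lemma ReB (x y : C) : complex.Re (x - y) = complex.Re x - complex.Re y. Proof. by rewrite ReD ReN. Qed.
Lemma Re0 : complex.Re (0 : C) = 0. Proof. by []. Qed.
Lemma ReM_real (r : R) (z : C) : complex.Re (r%:C * z) = r * complex.Re z.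
Proof. by case: z => a b /=; rewrite mul0r subr0. Qed.
Lemma ImM_real (r : R) (z : C) : complex.Im (r%:C * z) = r * complex.Im z.
Proof. by case: z => a b /=; rewrite mul0r addr0. Qed.
Lemma Re_sum (I : Type) (r : seq I) (P : pred I) (F : I -> C) :
  complex.Re (\sum_(i <- r | P i) F i) = \sum_(i <- r | P i) complex.Re (F i).
Proof. by apply: (big_morph _ ReD Re0). Qed.
Lemma Re_conj (z : C) : complex.Re (conjc z) = complex.Re z. Proof. by case: z. Qed.
Lemma Im_conj (z : C) : complex.Im (conjc z) = - complex.Im z. Proof. by case: z. Qed.
Lemma natC (k : nat) : (k%:R : C) = (k%:R : R)%:C.
Proof. by rewrite rmorph_nat. Qed.
Lemma invC (r : R) : (r%:C)^-1 = (r^-1)%:C.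
Proof. by rewrite fmorphV. Qed.

Lemma tr_adj (A : Mx) : \tr (adjmx A) = conjc (\tr A).
Proof. rewrite /mxtrace rmorph_sum; apply: eq_bigr => i _; by rewrite mxE. Qed.

Lemma adjmxM (A B : Mx) : adjmx (A *m B) = adjmx B *m adjmx A.
Proof.
apply/matrixP => i j; rewrite !mxE rmorph_sum; apply: eq_bigr => k _.
by rewrite !mxE rmorphM mulrC.
Qed.
Lemma adjmxD (A B : Mx) : adjmx (A + B) = adjmx A + adjmx B.
Proof. by apply/matrixP => i j; rewrite !mxE rmorphD. Qed.
Lemma adjmxN (A : Mx) : adjmx (- A) = - adjmx A.
Proof. by apply/matrixP => i j; rewrite !mxE rmorphN. Qed.
Lemma adjmx1 : adjmx (1%:M : Mx) = 1%:M.
Proof. by apply/matrixP => i j; rewrite !mxE eq_sym conjc_nat. Qed.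

Lemma mxpowS (A : Mx) k : mxpow A k.+1 = A *m mxpow A k. Proof. by []. Qed.
Lemma mxpowSr (A : Mx) k : mxpow A k.+1 = mxpow A k *m A.
Proof.
elim: k => [|k IH]; first by rewrite /= mulmx1 mul1mx.
by rewrite [mxpow A k.+2]mxpowS {1}IH mulmxA.
Qed.
Lemma mxpow_herm (A : Mx) k : hermitian_mx A -> hermitian_mx (mxpow A k).
Proof.
rewrite /hermitian_mx => hA; elim: k => [|k IH]; first exact: adjmx1.
by rewrite mxpowS adjmxM IH hA -mxpowSr.
Qed.
Lemma ReTr_adj (A : Mx) : complex.Re (\tr (adjmx A)) = complex.Re (\tr A).
Proof. by rewrite tr_adj Re_conj. Qed.

Fixpoint Sd (A B : Mx) (k : nat) : Mx :=
  match k with 0 => 0 | k'.+1 => A *m Sd A B k' + B *m mxpow A k' end.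

Lemma trZ (c : C) (X : Mx) : \tr (c *: X) = c * \tr X.
Proof. by rewrite mxtraceZ. Qed.

Lemma dlem (A B : Mx) k : forall M : Mx,
  derivable (fun t : R => complex.Re (\tr (M *m mxpow (A + t%:C *: B) k))) 0 1 /\
  'D_1 (fun t : R => complex.Re (\tr (M *m mxpow (A + t%:C *: B) k))) 0
    = complex.Re (\tr (M *m Sd A B k)).
Proof.
elim: k => [|k IH] M.
  have -> : (fun t : R => complex.Re (\tr (M *m mxpow (A + t%:C *: B) 0)))
     = cst (complex.Re (\tr (M *m 1%:M))) by [].
  by rewrite /= mulmx0 mxtrace0; split; [exact: derivable_cst | exact: derive_cst].
set f1 := fun t : R => complex.Re (\tr ((M *m A) *m mxpow (A + t%:C *: B) k)).
set f2 := fun t : R => complex.Re (\tr ((M *m B) *m mxpow (A + t%:C *: B) k)).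
have -> : (fun t : R => complex.Re (\tr (M *m mxpow (A + t%:C *: B) k.+1)))
   = f1 + (@id R) * f2.
  apply/funext => t; rewrite /f1 /f2 mxpowS mulmxDl mulmxDr !mulmxA.
  rewrite -scalemxAr -scalemxAl mxtraceD mxtraceZ ReD ReM_real. reflexivity.
have [d1 e1] := IH (M *m A).
have [d2 e2] := IH (M *m B).
have did : derivable (@id R) 0 1 by exact: derivable_id.
have hM := derivableM did d2.
have hD := derivableD d1 hM.
rewrite /f1 /f2.
split; first exact: hD.
rewrite (deriveD d1 hM) (deriveM did d2) derive_id e1.
have sc : forall x : R, x%:A = x := fun x => mulr1 x.
rewrite scale0r add0r sc rmorph0 scale0r addr0 /=.
by rewrite mulmxDr mxtraceD ReD !mulmxA.
Qed.
End H.



Section H2.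
Context {R : realType}.
Context {n : nat}.
Local Notation C := (R[i]).
Local Notation Mx := ('M[R[i]]_n).

Lemma mxpowD (A : Mx) a b : mxpow A (a + b) = mxpow A a *m mxpow A b.
Proof.
elim: a => [|a IH]; first by rewrite add0n /= mul1mx.
by rewrite addSn !mxpowS IH mulmxA.
Qed.

Lemma trSd (A B : Mx) k : forall m,
  \tr (mxpow A m *m Sd A B k) = k%:R * \tr (mxpow A (m + k.-1) *m B).
Proof.
elim: k => [|k IH] m; first by rewrite /= mulmx0 mxtrace0 mul0r.
rewrite /= mulmxDr mulmxA -mxpowSr mxtraceD IH mulmxA [\tr (mxpow A m *m B *m _)]mxtrace_mulC mulmxA -mxpowD.
case: k {IH} => [|k]; first by rewrite mulr0n mul0r add0r mulr1n mul1r addn0 add0n.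
rewrite (_ : (m.+1 + k.+1.-1 = m + k.+1)%N); last by rewrite addSnnS.
by rewrite (addnC k.+1 m) [k.+2%:R]mulrS mulrDl mul1r addrC.
Qed.

Lemma pairing_sub (D E X : Mx) : pairing (D - E) X = pairing D X - pairing E X.
Proof. by rewrite /pairing mulmxBl raddfB /= ReB. Qed.

Lemma herm_entry (D : Mx) i j : hermitian_mx D -> D j i = conjc (D i j).
Proof. move=> hD; by rewrite -[in LHS]hD mxE. Qed.

Lemma Re_normsq (z : C) : complex.Re (z * conjc z) = complex.Re z ^+ 2 + complex.Im z ^+ 2.
Proof. case: z => a b /=; by rewrite mulrN opprK !expr2. Qed.

Lemma herm_unique (D E : Mx) : hermitian_mx D -> hermitian_mx E ->
  (forall X, hermitian_mx X -> pairing D X = pairing E X) -> D = E.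
Proof.
move=> hD hE h.
have hZ : hermitian_mx (D - E) by rewrite /hermitian_mx adjmxD adjmxN hD hE.
have h0 : pairing (D - E) (D - E) = 0 by rewrite pairing_sub h ?subrr.
apply/eqP; rewrite -subr_eq0; apply/eqP/matrixP => i j; rewrite [RHS]mxE.
move: hZ h0; set Z := D - E => hZ h0.
have hs : \sum_i \sum_j (complex.Re (Z i j) ^+ 2 + complex.Im (Z i j) ^+ 2) = 0.
  rewrite -[RHS]h0 /pairing /mxtrace Re_sum; apply: eq_bigr => i' _.
  rewrite mxE Re_sum; apply: eq_bigr => j' _.
  by rewrite (herm_entry Z i' j' hZ) Re_normsq.
have ge0 : forall a b : R, 0 <= a ^+ 2 + b ^+ 2 by move=> a b; rewrite addr_ge0 // sqr_ge0.
have hi := psumr_eq0P (fun i' _ => sumr_ge0 _ (fun j' _ => ge0 _ _)) hs (i:=i) isT.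
have hij := psumr_eq0P (fun j' _ => ge0 _ _) hi (i:=j) isT.
move/eqP: hij; rewrite paddr_eq0 ?sqr_ge0 // !sqrf_eq0 => /andP [/eqP h1 /eqP h2].
by move: h1 h2; case: (Z i j) => a b /= -> ->.
Qed.
End H2.



Section H3.
Context {R : realType}.
Context {n : nat}.
Local Notation C := (R[i]).
Local Notation Mx := ('M[R[i]]_n).

Lemma trdiag (g : 'rV[R]_n) (A : Mx) :
  \tr (diagR g *m A) = \sum_i (g ord0 i)%:C * A i i.
Proof.
apply: eq_bigr => i _; rewrite mxE (bigD1 i) //= mxE eqxx big1 ?addr0 //.
by move=> j /negbTE hj; rewrite mxE eq_sym hj mul0r.
Qed.

Lemma pairing0l (X : Mx) : pairing 0 X = 0.
Proof. by rewrite /pairing mul0mx mxtrace0. Qed.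

Lemma diagR0 : diagR (0 : 'rV[R]_n) = 0.
Proof. apply/matrixP => i j; rewrite !mxE; by case: (i == j). Qed.

Lemma nabla_Hk k q J g : is_nabla1 (@Hk R n k) q J g -> g = 0.
Proof.
move=> h; have [_ e] := h g.
have hc : (fun t : R => @Hk R n k (q + t *: g) J) = cst (@Hk R n k q J) by [].
rewrite hc derive_cst /pairing trdiag Re_sum in e.
have hs : \sum_i (g ord0 i) ^+ 2 = 0.
  rewrite [RHS]e; apply: eq_bigr => i _; by rewrite mxE eqxx /= mulr0 subr0 expr2.
apply/rowP => j; rewrite mxE.
have := psumr_eq0P (fun i _ => sqr_ge0 (g ord0 i)) hs (i:=j) isT.
by move/eqP; rewrite sqrf_eq0 => /eqP; rewrite (ord1 0).
Qed.

Lemma d2_Hk k q J D : (0 < k)%N -> hermitian_mx J ->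
  is_d2 (@Hk R n k) q J D -> D = mxpow J k.-1.
Proof.
move=> k0 hJ [hD h]; apply: herm_unique => //; first exact: mxpow_herm.
move=> X hX; have [_ e] := h X hX.
set c : C := (k%:R)^-1.
have hf : (fun t : R => @Hk R n k q (J + t%:C *: X)) =
   (fun t : R => complex.Re (\tr (c%:M *m mxpow (J + t%:C *: X) k))).
  by apply/funext => t; rewrite mul_scalar_mx mxtraceZ.
rewrite hf (dlem J X k c%:M).2 mul_scalar_mx mxtraceZ in e.
rewrite -e -[Sd J X k]mul1mx -[1%:M]/(mxpow J 0) trSd add0n mulrA /c mulVf ?mul1r //.
by rewrite pnatr_eq0 -lt0n.
Qed.
End H3.



Section H4.
Context {R : realType}.
Context {n : nat}.
Local Notation C := (R[i]).
Local Notation Mx := ('M[R[i]]_n).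

Lemma sinh_opp (x : R) : sinh (- x) = - sinh x.
Proof. by rewrite /sinh opprK -mulNr opprB. Qed.
Lemma cosh_opp (x : R) : cosh (- x) = cosh x.
Proof. by rewrite /cosh opprK addrC. Qed.
Lemma coth_opp (x : R) : coth (- x) = - coth x.
Proof. by rewrite /coth sinh_opp cosh_opp invrN mulrN. Qed.

Lemma conjcMr (x : C) (r : R) : conjc (x * r%:C) = conjc x * r%:C.
Proof. by case: x => a b; simpc. Qed.

Lemma adj_Rq (q : 'rV[R]_n) (P : Mx) : hermitian_mx P -> adjmx (Rq q P) = - Rq q P.
Proof.
move=> hP; apply/matrixP => i j; rewrite !mxE eq_sym.
case: (i == j); first by rewrite rmorph0 oppr0.
rewrite conjcMr -(herm_entry P j i hP).
by rewrite -opprB coth_opp rmorphN mulrN.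
Qed.

Lemma bracket_core (q : 'rV[R]_n) (J DF P : Mx) :
  hermitian_mx J -> hermitian_mx DF -> hermitian_mx P -> P *m J = J *m P ->
  2 * pairing (J *m DF) (Rq q P) = pairing J (mxcomm (Rq q DF) P + mxcomm DF (Rq q P)) /\
  pairing J (mxcomm (Rq q DF) P + mxcomm DF (Rq q P)) = pairing DF (mxcomm (Rq q P) J).
Proof.
move=> hJ hDF hP hPJ.
have e1 : pairing J (mxcomm (Rq q DF) P + mxcomm DF (Rq q P)) =
   complex.Re (\tr (J *m DF *m Rq q P)) - complex.Re (\tr (J *m Rq q P *m DF)).
  rewrite /pairing /mxcomm !mulmxDr !mulmxN !mxtraceD !raddfN /= !ReD !ReN.
  have t12 : \tr (J *m (Rq q DF *m P)) = \tr (J *m (P *m Rq q DF)).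
    by rewrite !mulmxA mxtrace_mulC mulmxA hPJ.
  rewrite t12 !mulmxA; lra.
have e2 : complex.Re (\tr (J *m Rq q P *m DF)) = - complex.Re (\tr (J *m DF *m Rq q P)).
  rewrite -[LHS]ReTr_adj !adjmxM adj_Rq // hJ hDF mulNmx mulmxN raddfN /= ReN.
  by rewrite mulmxA mxtrace_mulC mulmxA.
have e3 : pairing DF (mxcomm (Rq q P) J) =
   complex.Re (\tr (J *m DF *m Rq q P)) - complex.Re (\tr (J *m Rq q P *m DF)).
  rewrite /pairing /mxcomm mulmxDr mulmxN raddfD raddfN /= ReD ReN.
  have t1 : \tr (DF *m (Rq q P *m J)) = \tr (J *m DF *m Rq q P).
    by rewrite mulmxA mxtrace_mulC mulmxA.
  have t2 : \tr (DF *m (J *m Rq q P)) = \tr (J *m Rq q P *m DF) by rewrite mxtrace_mulC.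
  by rewrite t1 t2.
rewrite e1 e3 /pairing -mulmxA; split => //.
rewrite e2 !mulmxA; lra.
Qed.
End H4.



Section H5.
Context {R : realType}.
Context {n : nat}.
Local Notation C := (R[i]).
Local Notation Mx := ('M[R[i]]_n).

Lemma htilde0 k q (J : Mx) : hermitian_mx J -> @htilde R n k q J = 0.
Proof.
move=> hJ; rewrite /htilde /Htr natC invC ImM_real.
have hP := mxpow_herm J k hJ.
have e : complex.Im (\tr (mxpow J k)) = - complex.Im (\tr (mxpow J k)).
  by rewrite -{1}hP tr_adj; case: (\tr (mxpow J k)) => a b.
have -> : complex.Im (\tr (mxpow J k)) = 0 by lra.
by rewrite mulr0.
Qed.

Lemma normsq (x : C) : `|x| ^+ 2 = x * conjc x.
Proof. rewrite -add_Re2_Im2; case: x => a b; simpc. by rewrite /= !expr2 [b * a]mulrC addNr. Qed.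

Lemma ord_pred (i j : 'I_n) : (j != i) && ~~ (i < j)%N = (j < i)%N.
Proof. rewrite -val_eqE /=. lia. Qed.
Lemma ord_pred2 (i j : 'I_n) : (j != i) && (i < j)%N = (i < j)%N.
Proof. rewrite -val_eqE /=. lia. Qed.
Lemma alg4 (x y S : C) : -(x / S) * -(-y / -S) = x * y / S^+2.
Proof. by rewrite invrN mulrN mulNr opprK mulrNN mulrACA -expr2 exprVn. Qed.

Lemma H2lem (q p : 'rV[R]_n) (xi : Mx) : antihermitian_mx xi ->
  Htr 2 (Jpar q p xi) =
       ((2%:R)^-1 * \sum_(i < n) p ord0 i ^+ 2)%:C
       + \sum_(i < n) \sum_(j < n | (i < j)%N)
           `|xi i j| ^+ 2 / ((sinh (q ord0 i - q ord0 j)) ^+ 2)%:C.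
Proof.
move=> hxi.
set Jp := Jpar q p xi.
set f := fun i j => Jp i j * Jp j i.
have hT : \tr (mxpow Jp 2) = \sum_i \sum_j f i j.
  rewrite /mxpow /= mulmx1 /mxtrace; apply: eq_bigr => i _; by rewrite mxE.
have hxij : forall i j, xi j i = - conjc (xi i j).
  move=> i j; have := congr1 (fun M : Mx => M j i) hxi; rewrite !mxE => h.
  by rewrite h opprK.
have hdiag : forall i, f i i = (p ord0 i ^+ 2)%:C.
  by move=> i; rewrite /f /Jp !mxE eqxx rmorphXn expr2.
have hoff : forall i j, i != j ->
    f i j = `|xi i j| ^+ 2 / ((sinh (q ord0 i - q ord0 j)) ^+ 2)%:C.
  move=> i j hij; rewrite /f /Jp !mxE (negbTE hij) eq_sym (negbTE hij) (hxij i j).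
  rewrite (_ : q ord0 j - q ord0 i = - (q ord0 i - q ord0 j)); last by rewrite opprB.
  by rewrite sinh_opp rmorphN alg4 normsq rmorphXn.
have hsplit : forall i : 'I_n, \sum_(j < n) f i j =
    f i i + \sum_(j < n | (i < j)%N) f i j + \sum_(j < n | (j < i)%N) f i j.
  move=> i; rewrite (bigD1 i) //= (bigID (fun j : 'I_n => (i < j)%N)) /= addrA.
  congr (_ + _ + _); apply: eq_bigl => j; [exact: ord_pred2 | exact: ord_pred].
have hex : \sum_(i < n) \sum_(j < n | (j < i)%N) f i j = \sum_(i < n) \sum_(j < n | (i < j)%N) f i j.
  rewrite (exchange_big_dep xpredT) //=; apply: eq_bigr => i _.
  by apply: eq_bigr => j _; rewrite /f mulrC.
have hG : \sum_(i < n) \sum_(j < n | (i < j)%N) f i j = \sum_(i < n) \sum_(j < n | (i < j)%N)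
           `|xi i j| ^+ 2 / ((sinh (q ord0 i - q ord0 j)) ^+ 2)%:C.
  apply: eq_bigr => i _; apply: eq_bigr => j hj; apply: hoff.
  by rewrite -val_eqE /= neq_ltn hj.
rewrite /Htr hT (eq_bigr _ (fun i _ => hsplit i)) !big_split /= hex hG.
rewrite (eq_bigr _ (fun i _ => hdiag i)) -rmorph_sum.
set G := \sum_(i < n) _.
rewrite natC invC -addrA -mulr2n mulrDr rmorphM; congr (_ + _).
rewrite -[G *+ 2]mulr_natl mulrA natC -rmorphM mulVf ?rmorph1 ?mul1r //.
Qed.
End H5.



Theorem corollary4p5 (R : realType) (n : nat) :
  (* the bracket identities, at every point (e^q, J^-) of M_{0,-}^reg *)
  (forall F : fn R n, torus_invariant F ->
   forall k : nat, (0 < k)%N ->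
   forall (q : 'rV[R]_n) (J : 'M[R[i]]_n), regular_q q -> hermitian_mx J ->
   forall (gF : 'rV[R]_n) (DF : 'M[R[i]]_n),
     is_nabla1 F q J gF -> is_d2 F q J DF ->
   forall (gH : 'rV[R]_n) (DH : 'M[R[i]]_n),
     is_nabla1 (@Hk R n k) q J gH -> is_d2 (@Hk R n k) q J DH ->
   forall (gH' : 'rV[R]_n) (DH' : 'M[R[i]]_n),
     is_nabla1 (@Hk R n k.+1) q J gH' -> is_d2 (@Hk R n k.+1) q J DH' ->
   bracket2 q J gF DF gH DH = bracket1 q J gF DF gH' DH' /\
   bracket1 q J gF DF gH' DH' =
     pairing (diagR gF) (Vq k J) + pairing DF (VJ k q J))
  /\
  (* the formula for H_2 in the (q, p, xi) parametrization *)
  (forall (q p : 'rV[R]_n) (xi : 'M[R[i]]_n),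
     regular_q q -> antihermitian_mx xi -> (forall i, xi i i = 0) ->
     Htr 2 (Jpar q p xi) =
       ((2%:R)^-1 * \sum_(i < n) p ord0 i ^+ 2)%:C
       + \sum_(i < n) \sum_(j < n | (i < j)%N)
           `|xi i j| ^+ 2 / ((sinh (q ord0 i - q ord0 j)) ^+ 2)%:C)
  /\
  (* htilde_k = (1/k) Im tr(J^k) vanishes on M_{0,-}^reg *)
  (forall k : nat, (0 < k)%N ->
   forall (q : 'rV[R]_n) (J : 'M[R[i]]_n), regular_q q -> hermitian_mx J ->
     htilde k q J = 0).
Proof.
split; [|split].
- move=> F _ k k0 q J _ hJ gF DF _ [hDF _] gH DH hgH hDH gH' DH' hgH' hDH'.
  case: k k0 gH DH hgH hDH gH' DH' hgH' hDH' => // k _ gH DH hgH hDH gH' DH' hgH' hDH'.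
  rewrite (nabla_Hk _ _ _ _ hgH) (nabla_Hk _ _ _ _ hgH') (d2_Hk _ _ _ _ (ltn0Sn k) hJ hDH).
  rewrite (d2_Hk _ _ _ _ (ltn0Sn k.+1) hJ hDH').
  rewrite /bracket1 /bracket2 diagR0 !pairing0l !subr0.
  have hPJ : mxpow J k.+1 *m J = J *m mxpow J k.+1 by rewrite -mxpowSr.
  have [c1 c2] := bracket_core q _ _ _ hJ hDF (mxpow_herm J k.+1 hJ) hPJ.
  change (J *m mxpow J k.+1.-1) with (mxpow J k.+1).
  change (mxpow J k.+2.-1) with (mxpow J k.+1).
  rewrite c1; split => //.
  rewrite c2; congr (_ + _).
  rewrite /pairing !trdiag; congr complex.Re; apply: eq_bigr => i _.
  by rewrite [Vq _ _ i i]mxE eqxx.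
- by move=> q p xi _ hxi _; exact: H2lem.
- by move=> k _ q J _ hJ; exact: htilde0.
Qed.
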